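(* Under Assumption 1, $\lim_{\nu\to\infty}T^\nu=\frac1N\mathbf{1}_N\mathbf{1}_N^\top$, $\lim_{\nu\to\infty}A_\nu=A_\infty$, and $\lim_{\nu\to\infty}F_\nu(x)=F_\infty(x)$ uniformly in $x\in\mathcal{X}$. Moreover the operators $F_\nu$ are bounded on $\mathcal{X}$, uniformly in $\nu$.
   Context: Let $N,n,m$ be positive integers; for $i\in\{1,\dots,N\}$, $\mathcal{X}^i\subset\mathbb{R}^n$ is convex, compact with non-empty interior; $\mathcal{X}=\mathcal{X}^1\times\dots\times\mathcal{X}^N$, $x=[x^1;\dots;x^N]$. Costs $J^i(z_1,z_2):\mathcal{X}^i\times\mathrm{conv}(\mathcal{X}^1,\dots,\mathcal{X}^N)\to\mathbb{R}$ are continuously differentiable in $(z_1,z_2)$, with $x^i\mapsto J^i(x^i,\frac1N\sum_jx^j)$ convex for each fixed $x^{-i}$. $\hat A\in\mathbb{R}^{m\times n}$. $T\in[0,1]^{N\times N}$. Define $\sigma_\infty(x)=\frac1N\sum_jx^j$, $\sigma^i_\nu(x)=\sum_j[T^\nu]_{ij}x^j$, $A_\nu=T^\nu\otimes\hat A$, $A_\infty=\frac1N\mathbf{1}_N\mathbf{1}_N^\top\otimes\hat A$, $F_\infty(x)=[\nabla_{z_1}J^i(x^i,\sigma_\infty(x))+\frac1N\nabla_{z_2}J^i(x^i,\sigma_\infty(x))]_{i=1}^N$, $F_\nu(x)=[\nabla_{z_1}J^i(x^i,\sigma^i_\nu(x))+[T^\nu]_{ii}\nabla_{z_2}J^i(x^i,\sigma^i_\nu(x))]_{i=1}^N$.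 Assumption 1: $T$ is primitive (some power has all entries positive) and doubly stochastic. *)

(* Defs.v *)
From HB Require Import structures.
From mathcomp Require Import all_boot all_order all_algebra.
From mathcomp Require Import all_classical all_reals all_analysis.
From mathcomp Require Import mxtens.
Set Implicit Arguments. Unset Strict Implicit. Unset Printing Implicit Defensive.
Import Order.TTheory GRing.Theory Num.Theory.
Import numFieldNormedType.Exports.
Local Open Scope classical_set_scope.
Local Open Scope ring_scope.

Section Defs.
Variable R : realType.

Definition convhull (n : nat) (S : set 'rV[R]_n) : set 'rV[R]_n :=
  [set y | exists (k : nat) (w : 'I_k -> R) (p : 'I_k -> 'rV[R]_n),
     [/\ (forall j, 0 <= w j), \sum_(j < k) w j = 1,
         (forall j, S (p j)) & y = \sum_(j < k) w j *: p j]].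

Definition convU (N n : nat) (X : 'I_N -> set 'rV[R]_n) : set 'rV[R]_n :=
  convhull (\bigcup_(i in [set: 'I_N]) X i).

Definition grad1 (n : nat) (J : 'rV[R]_n -> 'rV[R]_n -> R) (z1 z2 : 'rV[R]_n)
  : 'rV[R]_n := \row_k ('D_(delta_mx 0 k) (fun w => J w z2) z1).
Definition grad2 (n : nat) (J : 'rV[R]_n -> 'rV[R]_n -> R) (z1 z2 : 'rV[R]_n)
  : 'rV[R]_n := \row_k ('D_(delta_mx 0 k) (fun w => J z1 w) z2).

Definition C1_on (n : nat) (J : 'rV[R]_n -> 'rV[R]_n -> R)
  (D : set ('rV[R]_n * 'rV[R]_n)) : Prop :=
  (forall p, D p -> differentiable (fun q : 'rV[R]_n * 'rV[R]_n => J q.1 q.2) p)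
  /\ {within D, continuous (fun q : 'rV[R]_n * 'rV[R]_n => grad1 J q.1 q.2)}
  /\ {within D, continuous (fun q : 'rV[R]_n * 'rV[R]_n => grad2 J q.1 q.2)}.

(* stacked vector x = [x^1; ...; x^N] represented as 'I_N -> R^n *)
Definition inX (N n : nat) (X : 'I_N -> set 'rV[R]_n) (x : 'I_N -> 'rV[R]_n) :=
  forall i, X i (x i).

Definition sigma_inf (N n : nat) (x : 'I_N -> 'rV[R]_n) : 'rV[R]_n :=
  N%:R^-1 *: \sum_(j < N) x j.

Definition sigma_nu (N n : nat) (T : 'M[R]_N) (nu : nat) (i : 'I_N)
  (x : 'I_N -> 'rV[R]_n) : 'rV[R]_n := \sum_(j < N) (T ^+ nu) i j *: x j.

Definition F_inf (N n : nat) (J : 'I_N -> 'rV[R]_n -> 'rV[R]_n -> R)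
  (x : 'I_N -> 'rV[R]_n) (i : 'I_N) : 'rV[R]_n :=
  grad1 (J i) (x i) (sigma_inf x) + N%:R^-1 *: grad2 (J i) (x i) (sigma_inf x).

Definition F_nu (N n : nat) (J : 'I_N -> 'rV[R]_n -> 'rV[R]_n -> R)
  (T : 'M[R]_N) (nu : nat) (x : 'I_N -> 'rV[R]_n) (i : 'I_N) : 'rV[R]_n :=
  grad1 (J i) (x i) (sigma_nu T nu i x)
  + (T ^+ nu) i i *: grad2 (J i) (x i) (sigma_nu T nu i x).

Definition A_nu (N n m : nat) (T : 'M[R]_N) (Ahat : 'M[R]_(m, n)) (nu : nat)
  : 'M[R]_(N * m, N * n) := tensmx (T ^+ nu) Ahat.
Definition Jmat (N : nat) : 'M[R]_N := N%:R^-1 *: const_mx 1.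
Definition A_inf (N n m : nat) (Ahat : 'M[R]_(m, n)) : 'M[R]_(N * m, N * n) :=
  tensmx (Jmat N) Ahat.

Definition primitive (N : nat) (T : 'M[R]_N) :=
  exists k : nat, forall i j, 0 < (T ^+ k) i j.
Definition doubly_stochastic (N : nat) (T : 'M[R]_N) :=
  (forall i j, 0 <= T i j) /\ (forall i, \sum_(j < N) T i j = 1)
  /\ (forall j, \sum_(i < N) T i j = 1).

Definition upd (N n : nat) (x : 'I_N -> 'rV[R]_n) (i : 'I_N) (w : 'rV[R]_n) :=
  fun j => if j == i then w else x j.
End Defs.

(* Main.v *)
Require Import Defs.
From HB Require Import structures.
From mathcomp Require Import all_boot all_order all_algebra.
From mathcomp Require Import all_classical all_reals all_analysis.
From mathcomp Require Import mxtens.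
From mathcomp Require Import ring lra zify.
Import Order.TTheory GRing.Theory Num.Theory.
Import numFieldNormedType.Exports.
Local Open Scope classical_set_scope.
Local Open Scope ring_scope.

Section P1.
Context {R : realType}.

Definition stoch {N : nat} (P : 'M[R]_N) :=
  (forall i j, 0 <= P i j) /\ (forall i, \sum_(j < N) P i j = 1).

Lemma sum_ge_term {N : nat} (f : 'I_N -> R) l0 :
  (forall l, 0 <= f l) -> f l0 <= \sum_l f l.
Proof.
move=> f0; rewrite (bigD1 l0) //= lerDl; exact: sumr_ge0.
Qed.

Lemma stoch_le1 {N} (P : 'M[R]_N) i j : stoch P -> P i j <= 1.
Proof. by case=> P0 P1; rewrite -(P1 i); apply: sum_ge_term. Qed.

Lemma stochM {N} (P Q : 'M[R]_N) : stoch P -> stoch Q -> stoch (P * Q).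
Proof.
case=> P0 P1 [Q0 Q1]; split=> [i j|i]; rewrite -mulmxE.
  rewrite mxE; apply: sumr_ge0 => l _; exact: mulr_ge0.
under eq_bigr do rewrite mxE.
rewrite exchange_big /= -(P1 i); apply: eq_bigr => l _.
by rewrite -mulr_sumr Q1 mulr1.
Qed.

Lemma stoch1 N : stoch (1 : 'M[R]_N).
Proof.
split=> [i j|i]; first by rewrite mxE ler0n.
rewrite (bigD1 i) //= big1 ?addr0 => [|j /negbTE ji]; rewrite mxE.
  by rewrite eqxx.
by rewrite eq_sym ji.
Qed.

Lemma stochX {N} (P : 'M[R]_N) k : stoch P -> stoch (P ^+ k).
Proof.
move=> sP; elim: k => [|k IH]; first by rewrite expr0; exact: stoch1.
by rewrite exprS; apply: stochM.
Qed.

Lemma colsumM {N} (P Q : 'M[R]_N) :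
  (forall j, \sum_i P i j = 1) -> (forall j, \sum_i Q i j = 1) ->
  forall j, \sum_i (P * Q) i j = 1.
Proof.
move=> P1 Q1 j; rewrite -mulmxE.
under eq_bigr do rewrite mxE.
rewrite exchange_big /= -(Q1 j); apply: eq_bigr => l _.
by rewrite -mulr_suml P1 mul1r.
Qed.

Lemma colsumX {N} (P : 'M[R]_N) k :
  (forall j, \sum_i P i j = 1) -> forall j, \sum_i (P ^+ k) i j = 1.
Proof.
move=> P1; elim: k => [|k IH].
  rewrite expr0 => j; rewrite (bigD1 j) //= big1 ?addr0 => [|i /negbTE ij];
    rewrite mxE ?eqxx //.
  by rewrite ij.
by rewrite exprS; apply: colsumM.
Qed.

Lemma contract {N} (P B : 'M[R]_N) (l0 : 'I_N) j (a w d : R) :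
  stoch P -> (forall i l, d <= P i l) -> 0 <= d ->
  (forall l, a <= B l j <= a + w) ->
  exists a', forall i, a' <= (P * B) i j <= a' + (1 - d) * w.
Proof.
move=> [P0 P1] Pd d0 Bb.
exists (a + d * (B l0 j - a)) => i; rewrite -mulmxE mxE.
have E1 : \sum_l P i l * B l j = a + \sum_l P i l * (B l j - a).
  rewrite -[X in X + _]mulr1 -(P1 i) mulr_sumr -big_split /=.
  by apply: eq_bigr => l _; ring.
have E2 : \sum_l P i l * B l j = a + w - \sum_l P i l * (a + w - B l j).
  rewrite -[X in X - _]mulr1 -(P1 i) mulr_sumr -sumrB /=.
  by apply: eq_bigr => l _; ring.
have [Bl0a Bl0b] := andP (Bb l0).
apply/andP; split.
  rewrite E1 lerD2l.
  have S := @sum_ge_term N (fun l => P i l * (B l j - a)) l0.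
  apply: le_trans (S _); first by apply: ler_pM => //; rewrite subr_ge0.
  by move=> l; apply: mulr_ge0 => //; have /andP[? _] := Bb l; rewrite subr_ge0.
rewrite E2.
have H : d * (a + w - B l0 j) <= \sum_l P i l * (a + w - B l j).
  have S := @sum_ge_term N (fun l => P i l * (a + w - B l j)) l0.
  apply: le_trans (S _); first by apply: ler_pM => //; rewrite subr_ge0.
  by move=> l; apply: mulr_ge0 => //; have /andP[_ ?] := Bb l; rewrite subr_ge0.
have -> : a + d * (B l0 j - a) + (1 - d) * w = a + w - d * (a + w - B l0 j).
  by ring.
by rewrite lerB.
Qed.


Lemma pos_lb (I : finType) (f : I -> R) : (forall i, 0 < f i) ->
  exists d, [/\ 0 < d, d <= 1 & forall i, d <= f i].
Proof.
move=> f0.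
suff [d [d0 d1 H]] : exists d, [/\ 0 < d, d <= 1 & forall i, i \in enum I -> d <= f i].
  by exists d; split => // i; apply: H; rewrite mem_enum.
elim: (enum I) => [|x s [d [d0 d1 H]]]; first by exists 1.
exists (Order.min d (f x)); split.
- by rewrite lt_min d0 f0.
- by rewrite ge_min d1.
- move=> i; rewrite in_cons => /orP[/eqP->|/H]; first by rewrite ge_min lexx orbT.
  by move=> h; rewrite ge_min h.
Qed.

Lemma band {N} (T : 'M[R]_N) (l0 : 'I_N) k d : stoch T ->
  (forall i l, d <= (T ^+ k) i l) -> 0 <= d ->
  forall q nu, (q * k <= nu)%N -> forall j, exists a, forall i,
    a <= (T ^+ nu) i j <= a + (1 - d) ^+ q.
Proof.
move=> sT Hd d0; elim=> [|q IH] nu hq j.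
  exists 0 => i; rewrite expr0 add0r.
  have sTn := stochX T nu sT.
  by rewrite (proj1 sTn) stoch_le1.
have hk : (k <= nu)%N by move: hq; rewrite mulSn; lia.
have [a Ha] := IH (nu - k)%N ltac:(move: hq; rewrite mulSn; lia) j.
have := @contract _ (T ^+ k) (T ^+ (nu - k)) l0 j _ _ _ (stochX T k sT) Hd d0 Ha.
by rewrite -exprD subnKC // -exprS.
Qed.

Lemma band_close {N} (t : 'I_N -> R) a w : (0 < N)%N ->
  \sum_l t l = 1 -> (forall l, a <= t l <= a + w) ->
  forall i, `|N%:R^-1 - t i| <= w.
Proof.
move=> N0 ts Hb i.
have Np : 0 < (N%:R : R) by rewrite ltr0n.
have h1 : a * N%:R <= 1.
  rewrite -{2}ts; have -> : a * N%:R = \sum_(l < N) a by rewrite sumr_const card_ord mulr_natr.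
  apply: ler_sum => l _.
  by have /andP[] := Hb l.
have h2 : 1 <= (a + w) * N%:R.
  rewrite -{1}ts; have -> : (a + w) * N%:R = \sum_(l < N) (a + w) by rewrite sumr_const card_ord mulr_natr.
  apply: ler_sum => l _.
  by have /andP[] := Hb l.
have g1 : a <= N%:R^-1 by rewrite -div1r ler_pdivlMr.
have g2 : N%:R^-1 <= a + w by rewrite -div1r ler_pdivrMr.
have /andP[g3 g4] := Hb i.
rewrite ler_norml; apply/andP; split; lra.
Qed.

Lemma Tentry {N} (T : 'M[R]_N) : (0 < N)%N -> stoch T ->
  (forall j, \sum_i T i j = 1) -> primitive T ->
  forall e, 0 < e -> exists K0, forall nu, (K0 <= nu)%N -> forall i j,
    `|N%:R^-1 - (T ^+ nu) i j| <= e.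
Proof.
move=> N0 sT cT [k Hk] e e0.
have [d [d0 d1 Hd]] := @pos_lb _ (fun p : 'I_N * 'I_N => (T ^+ k) p.1 p.2) (fun p => Hk p.1 p.2).
have Hd' : forall i l, d <= (T ^+ k) i l by move=> i l; exact: (Hd (i, l)).
have c1 : `|1 - d| < 1 by rewrite ger0_norm ?subr_ge0 // ltrBlDr ltrDl.
have := cvg_expr c1; move/cvgrPdist_le/(_ e e0) => [q _ Hq].
have {}Hq := Hq q (leqnn q); rewrite /= sub0r normrN ger0_norm in Hq; last first.
  by apply: exprn_ge0; rewrite subr_ge0.
exists (q * k)%N => nu hnu i j.
have [a Ha] := @band _ T (Ordinal N0) k d sT Hd' (ltW d0) q nu hnu j.
apply: le_trans Hq.
exact: (@band_close N (fun l => (T ^+ nu) l j) a _ N0 (colsumX T nu cT j) Ha i).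
Qed.

Lemma Tconv {N} (T : 'M[R]_N) : (0 < N)%N -> stoch T ->
  (forall j, \sum_i T i j = 1) -> primitive T ->
  (fun nu => T ^+ nu) @ \oo --> Jmat R N.
Proof.
move=> N0 sT cT pT; apply/cvgrPdist_le => e e0.
have [K0 HK] := @Tentry _ T N0 sT cT pT e e0.
exists K0 => // nu /= hnu.
rewrite /Num.norm /= mx_normrE; apply/bigmax_leP; split; first exact: ltW.
move=> [i j] _ /=; rewrite !mxE mulr1; exact: HK.
Qed.

End P1.
Section P2.
Context {R : realType}.

Lemma entry_le {m n} (M : 'M[R]_(m, n)) i j : `|M i j| <= `|M|.
Proof.
rewrite /Num.norm /= mx_normrE.
exact: (le_bigmax _ (fun ij : 'I_m * 'I_n => `|M ij.1 ij.2|) (i, j)).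
Qed.

Lemma Aconv {N n m} (T : 'M[R]_N) (Ahat : 'M[R]_(m, n)) :
  (fun nu => T ^+ nu) @ \oo --> Jmat R N ->
  (fun nu => A_nu T Ahat nu) @ \oo --> A_inf N Ahat.
Proof.
move=> /cvgrPdist_le HT; apply/cvgrPdist_le => e e0.
have c0 : 0 < `|Ahat| + 1 by rewrite ltr_pwDr.
have := HT (e / (`|Ahat| + 1)) (divr_gt0 e0 c0).
apply: filterS => nu Hnu.
rewrite /Num.norm /= mx_normrE; apply/bigmax_leP; split; first exact: ltW.
move=> [a b] _ /=; rewrite /A_nu /A_inf /tensmx !mxE -mulrBl normrM.
have h1 := le_trans (entry_le (Jmat R N - T ^+ nu) (mxtens_unindex a).1 (mxtens_unindex b).1) Hnu.
rewrite !mxE in h1.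
have h2 := entry_le Ahat (mxtens_unindex a).2 (mxtens_unindex b).2.
apply: le_trans (ler_pM (normr_ge0 _) (normr_ge0 _) h1 h2) _.
rewrite mulrAC ler_pdivrMr // mulrDr mulr1 lerDl; exact: ltW.
Qed.
End P2.
Section P3.
Context {R : realType}.

Lemma within_cont_pt (V W : normedModType R) (K : set V) (g : V -> W) x :
  {within K, continuous g} -> K x -> forall e, 0 < e ->
  exists2 eta, 0 < eta & forall y, K y -> `|x - y| < eta -> `|g x - g y| < e.
Proof.
move=> cg Kx e e0.
have := (subspace_continuousP _ _).1 cg x Kx => /cvgrPdist_lt/(_ e e0).
rewrite near_withinE => /nbhs_ballP [eta eta0 H].
exists eta => // y Ky xy; apply: (H y) => //.
by rewrite -ball_normE /ball_.
Qed.

Lemma HC (V W : normedModType R) (K : set V) (g : V -> W) :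
  compact K -> {within K, continuous g} -> forall e, 0 < e ->
  exists2 d, 0 < d & forall p q, K p -> K q -> `|p - q| < d -> `|g p - g q| < e.
Proof.
move=> cK cg e e0.
have /near_covering_withinP cov := (compact_near_coveringP K).1 cK.
have H : forall x, K x -> \forall x' \near x & d \near 0^'+, K x' ->
    forall q, K q -> `|x' - q| < d -> `|g x' - g q| < e.
  move=> x Kx.
  have [eta eta0 Heta] := @within_cont_pt _ _ K g x cg Kx _ (divr_gt0 e0 (ltr0n R 2)).
  exists (ball x (eta / 2), [set d | d < eta / 2]) => /=.
    split; first by apply: nbhsx_ballx; rewrite divr_gt0.
    by apply: nbhs_right_lt; rewrite divr_gt0.
  move=> [x' d] /= [xx' dd] Kx' q Kq x'q.
  rewrite -ball_normE /ball_ in xx'.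
  have he : eta / 2 < eta by lra.
  have h1 := Heta x' Kx' (lt_trans xx' he).
  have h2 : `|x - q| < eta.
    rewrite (_ : x - q = (x - x') + (x' - q)); last by rewrite addrA addrNK.
    apply: le_lt_trans (ler_normD _ _) _.
    rewrite (splitr eta); apply: ltrD; [exact: xx' | exact: lt_trans x'q dd].
  have h3 := Heta q Kq h2.
  rewrite (_ : g x' - g q = (g x' - g x) + (g x - g q)); last first.
    by rewrite addrA subrK.
  apply: le_lt_trans (ler_normD _ _) _.
  rewrite distrC in h1.
  by rewrite (splitr e); apply: ltrD.
have Hn := cov R ((0:R)^'+) (fun d p => forall q, K q -> `|p - q| < d -> `|g p - g q| < e) _ H.
have [d [d0 Hd]] : exists d, 0 < d /\ K `<=` (fun p => forall q, K q -> `|p - q| < d -> `|g p - g q| < e).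
  near (0:R)^'+ => d; exists d; split; [by [] | near: d; exact: Hn].
exists d => // p q Kp Kq; exact: Hd.
Unshelve. all: by end_near.
Qed.
End P3.
Section P4.
Context {R : realType}.

Lemma cpt_bound (V : normedModType R) (A : set V) : compact A ->
  exists2 M, 0 <= M & forall x, A x -> `|x| <= M.
Proof.
move=> cA; have [M [Mr HM]] := compact_bounded cA.
exists (`|M| + 1); first by rewrite addr_ge0.
apply: HM; apply: le_lt_trans (ler_norm M) _; by rewrite ltrDl.
Qed.

Lemma small_mul (a c : R) : 0 <= a -> 0 < c ->
  exists2 eta, 0 < eta & forall t, 0 <= t <= eta -> t * a < c.
Proof.
move=> a0 c0; have a1 : 0 < a + 1 by rewrite ltr_pwDr.
exists (c / (a + 1)); first exact: divr_gt0.
move=> t /andP[t0 te].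
apply: le_lt_trans (ler_wpM2r a0 te) _.
rewrite mulrAC ltr_pdivrMr // ltr_pM2l //; by rewrite ltrDl.
Qed.

Lemma cvg_bigsum {T : Type} {F : set_system T} {FF : Filter F}
  {V : normedModType R} (I : Type) (s : seq I) (f : I -> T -> V) (a : I -> V) :
  (forall j, f j t @[t --> F] --> a j) ->
  (\sum_(j <- s) f j t) @[t --> F] --> \sum_(j <- s) a j.
Proof.
move=> H; elim: s => [|j s IH].
  under eq_fun do rewrite big_nil.
  rewrite big_nil; exact: cvg_cst.
under eq_fun do rewrite big_cons.
rewrite big_cons; exact: cvgD.
Qed.

End P4.
Section P5.
Context {R : realType}.
Variables (N n : nat) (X : 'I_N -> set 'rV[R]_n) (i : 'I_N).
Local Notation PX := (prod_topology (fun _ : 'I_N => 'rV[R]_n)).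
Local Notation PW := (prod_topology (fun _ : 'I_N => R)).

Definition Psi (p : PX * PW) : 'rV[R]_n * 'rV[R]_n :=
  (p.1 i, \sum_j p.2 j *: p.1 j).

Definition v1 : 'rV[R]_1 := const_mx 1.

Definition Kp : set (PX * PW) :=
  (fun x : PX => forall j, X j (x j)) `*`
  ((fun w : PW => forall j, `[0, 1]%classic (w j)) `&`
   ((fun w : PW => \sum_j w j *: v1) @^-1` [set v1])).

Lemma cvg_bigsum' {T : Type} {F : set_system T} {FF : Filter F}
  {V : normedModType R} (I : Type) (s : seq I) (f : I -> T -> V) (a : I -> V) :
  (forall j, f j t @[t --> F] --> a j) ->
  (\sum_(j <- s) f j t) @[t --> F] --> \sum_(j <- s) a j.
Proof.
move=> H; elim: s => [|j s IH].
  under eq_fun do rewrite big_nil.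
  rewrite big_nil; exact: cvg_cst.
under eq_fun do rewrite big_cons.
rewrite big_cons; exact: cvgD.
Qed.

Lemma Psi_cont : continuous Psi.
Proof.
move=> p.
have h1 : (fun q : PX * PW => q.1 i) @ nbhs p --> p.1 i.
  have := @cvg_comp _ _ _ fst (fun x : PX => x i) (filter_prod (nbhs p.1) (nbhs p.2)) (nbhs p.1) (nbhs (p.1 i)) cvg_fst (@proj_continuous _ (fun _ : 'I_N => 'rV[R]_n) i p.1).
  exact.
have h2 : (fun q : PX * PW => \sum_j q.2 j *: q.1 j) @ nbhs p --> \sum_j p.2 j *: p.1 j.
  apply: cvg_bigsum' => j; apply: cvgZ.
    have := @cvg_comp _ _ _ snd (fun x : PW => x j) (filter_prod (nbhs p.1) (nbhs p.2)) (nbhs p.2) (nbhs (p.2 j)) cvg_snd (@proj_continuous _ (fun _ : 'I_N => R) j p.2).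
    exact.
  have := @cvg_comp _ _ _ fst (fun x : PX => x j) (filter_prod (nbhs p.1) (nbhs p.2)) (nbhs p.1) (nbhs (p.1 j)) cvg_fst (@proj_continuous _ (fun _ : 'I_N => 'rV[R]_n) j p.1).
  exact.
have := @cvg_pair _ _ _ (nbhs p) (nbhs (p.1 i)) (nbhs (\sum_j p.2 j *: p.1 j)) _ _ _ _ _ h1 h2.
exact.
Qed.
Lemma tyW : compact (fun w : PW => forall j, `[0, 1]%classic (w j)).
Proof.
exact: (@tychonoff _ (fun _ : 'I_N => R) (fun _ => `[0, 1]%classic) (fun _ => @segment_compact R 0 1)).
Qed.

Lemma closedS : closed ((fun w : PW => \sum_j w j *: v1) @^-1` [set v1]).
Proof.
apply: preimage_closed; last first.
  apply: compact_closed; [exact: norm_hausdorff | exact: compact_set1].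
move=> w _.
have h : (fun w : PW => \sum_j w j *: v1) @ nbhs w --> \sum_j w j *: v1.
  apply: cvg_bigsum' => j; apply: cvgZ; last exact: cvg_cst.
  have := @cvg_comp _ _ _ id (fun x : PW => x j) (nbhs w) (nbhs w) (nbhs (w j)) (@cvg_id _ _) (@proj_continuous _ (fun _ : 'I_N => R) j w).
  exact.
exact h.
Qed.

Lemma Kp_cpt : (forall j, compact (X j)) -> compact Kp.
Proof.
move=> cX; apply: compact_setX.
  exact: (@tychonoff _ (fun _ : 'I_N => 'rV[R]_n) X cX).
apply: compact_closedI; [exact: tyW | exact: closedS].
Qed.

Lemma C_cpt : (forall j, compact (X j)) -> compact (Psi @` Kp).
Proof.
move=> cX; apply: continuous_compact; last exact: Kp_cpt.
apply: continuous_subspaceT; exact: Psi_cont.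
Qed.

Lemma v1_sum (w : 'I_N -> R) : (\sum_j w j *: v1 = v1) <-> (\sum_j w j = 1).
Proof.
rewrite -scaler_suml; split => [/matrixP/(_ 0 0)|->]; last by rewrite scale1r.
by rewrite !mxE mulr1.
Qed.

Lemma C_sub : Psi @` Kp `<=` [set p | X i p.1 /\ convU X p.2].
Proof.
move=> _ [[x w] [/= Hx [/= Hw Hs]] <-]; split; first exact: Hx.
exists N, w, x; split => //.
- by move=> j; have := Hw j; rewrite /= in_itv /= => /andP[].
- by apply/v1_sum.
- by move=> j; exists j.
Qed.

End P5.

Section P6.
Variable R : realType.
Variables (N n : nat) (N0 : (0 < N)%N) (X : 'I_N -> set 'rV[R]_n)
  (cX : forall j, compact (X j))
  (J : 'I_N -> 'rV[R]_n -> 'rV[R]_n -> R) (i : 'I_N)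
  (hC : C1_on (J i) [set p | X i p.1 /\ convU X p.2])
  (T : 'M[R]_N) (sT : stoch T) (cT : forall j, \sum_i T i j = 1)
  (pT : primitive T).
Local Notation PX := (prod_topology (fun _ : 'I_N => 'rV[R]_n)).
Local Notation PW := (prod_topology (fun _ : 'I_N => R)).
Local Notation C := (Psi N n i @` Kp N n X).

Lemma mem_nu nu (x : 'I_N -> 'rV[R]_n) : inX X x ->
  C (x i, sigma_nu T nu i x).
Proof.
move=> Hx; exists ((x : PX), ((fun l => (T ^+ nu) i l) : PW)) => //.
split; first exact: Hx.
have [s0 s1] := stochX T nu sT.
split.
- by move=> j; rewrite /= in_itv /= s0 stoch_le1.
- by apply/v1_sum; exact: s1.
Qed.

Lemma mem_inf (x : 'I_N -> 'rV[R]_n) : inX X x ->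
  C (x i, sigma_inf x).
Proof.
move=> Hx; exists ((x : PX), ((fun l => N%:R^-1) : PW)); last first.
  by rewrite /Psi /sigma_inf scaler_sumr.
split; first exact: Hx.
have Np : 0 < (N%:R : R) by rewrite ltr0n.
split.
- move=> j; rewrite /= in_itv /= invr_ge0 ltW //=.
  by rewrite invr_le1 ?unitfE ?gt_eqF // ler1n.
- apply/v1_sum; rewrite sumr_const card_ord -[RHS](@mulVf _ (N%:R : R)) ?mulr_natr //.
  by rewrite gt_eqF.
Qed.


Local Notation g1 := (fun q : 'rV[R]_n * 'rV[R]_n => grad1 (J i) q.1 q.2).
Local Notation g2 := (fun q : 'rV[R]_n * 'rV[R]_n => grad2 (J i) q.1 q.2).

Lemma g_cont : {within C, continuous g1} /\ {within C, continuous g2}.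
Proof.
have sub := C_sub N n X i.
by split; apply: continuous_subspaceW sub _; [exact: hC.2.1 | exact: hC.2.2].
Qed.

Lemma g_bound : exists B, [/\ 0 <= B, forall q, C q -> `|g1 q| <= B
  & forall q, C q -> `|g2 q| <= B].
Proof.
have cC := C_cpt N n X i cX.
have [c1 c2] := g_cont.
have [B1 B10 H1] := cpt_bound _ _ (continuous_compact c1 cC).
have [B2 B20 H2] := cpt_bound _ _ (continuous_compact c2 cC).
exists (B1 + B2); split; first exact: addr_ge0.
- move=> q Cq; apply: le_trans (H1 _ (ex_intro2 _ _ q Cq erefl)) _; by rewrite lerDl.
- move=> q Cq; apply: le_trans (H2 _ (ex_intro2 _ _ q Cq erefl)) _; by rewrite lerDr.
Qed.

Lemma x_bound : exists2 B, 0 <= B & forall x, inX X x -> forall j, `|x j| <= B.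
Proof.
have : forall j, exists M, 0 <= M /\ forall y, X j y -> `|y| <= M.
  by move=> j; have [M M0 HM] := cpt_bound _ _ (cX j); exists M.
move=> /choice [Mf HMf].
exists (\sum_j Mf j); first by apply: sumr_ge0 => j _; exact: (HMf j).1.
move=> x Hx j; apply: le_trans ((HMf j).2 _ (Hx j)) _.
by apply: sum_ge_term => l; exact: (HMf l).1.
Qed.

Lemma F_bound : exists M, forall nu x, inX X x -> `|F_nu J T nu x i| <= M.
Proof.
have [B [B0 HB1 HB2]] := g_bound.
exists (B + B) => nu x Hx; rewrite /F_nu.
apply: le_trans (ler_normD _ _) _; apply: lerD; first exact: HB1 _ (mem_nu nu x Hx).
rewrite normrZ; have [s0 _] := stochX T nu sT.
rewrite ger0_norm //.
have := ler_pM (s0 i i) (normr_ge0 _) (stoch_le1 _ i i (stochX T nu sT)) (HB2 _ (mem_nu nu x Hx)).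
by rewrite mul1r.
Qed.

Lemma F_conv : forall e : R, 0 < e -> exists K : nat, forall nu : nat, (K <= nu)%N ->
  forall x, inX X x -> `|F_nu J T nu x i - F_inf J x i| < e.
Proof.
move=> e e0.
have e3 : 0 < e / 3 by rewrite divr_gt0.
have cC := C_cpt N n X i cX.
have [c1 c2] := g_cont.
have [d1 d10 Hd1] := HC _ _ _ _ cC c1 _ e3.
have [d2 d20 Hd2] := HC _ _ _ _ cC c2 _ e3.
have [B [B0 HB1 HB2]] := g_bound.
have [Bx Bx0 HBx] := x_bound.
pose dd := Order.min d1 d2.
have dd0 : 0 < dd by rewrite lt_min d10 d20.
have [eta1 eta10 He1] := small_mul _ _ (mulr_ge0 (ler0n R N) Bx0) dd0.
have [eta2 eta20 He2] := small_mul _ _ B0 e3.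
pose eta := Order.min eta1 eta2.
have eta0 : 0 < eta by rewrite lt_min eta10 eta20.
have [K0 HK] := Tentry T N0 sT cT pT eta eta0.
exists K0 => nu hnu x Hx.
have M1 := mem_nu nu x Hx; have M2 := mem_inf x Hx.
have HT : forall j, `|(T ^+ nu) i j - N%:R^-1| <= eta.
  by move=> j; rewrite distrC; exact: HK.
have dist : `|(x i, sigma_nu T nu i x) - (x i, sigma_inf x)| < dd.
  rewrite prod_normE /= subrr normr0.
  have -> : sigma_nu T nu i x - sigma_inf x =
            \sum_j (((T ^+ nu) i j - N%:R^-1) *: x j).
    rewrite /sigma_nu /sigma_inf scaler_sumr -sumrB.
    by apply: eq_bigr => j _; rewrite scalerBl.
  have h : `|\sum_j (((T ^+ nu) i j - N%:R^-1) *: x j)| <= eta * (N%:R * Bx).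
    apply: le_trans (ler_norm_sum _ _ _) _.
    have -> : eta * (N%:R * Bx) = \sum_(j < N) (eta * Bx).
      by rewrite sumr_const card_ord -mulr_natr; ring.
    apply: ler_sum => j _; rewrite normrZ.
    apply: ler_pM; [exact: normr_ge0 | exact: normr_ge0 | exact: HT | exact: HBx].
  have h2 : eta * (N%:R * Bx) < dd.
    apply: He1; rewrite (ltW eta0) /=; by rewrite ge_min lexx.
  rewrite max_r ?normr_ge0 //; exact: le_lt_trans h h2.
have dd1 : dd <= d1 by rewrite ge_min lexx.
have dd2 : dd <= d2 by rewrite ge_min lexx orbT.
have a1 := Hd1 _ _ M1 M2 (lt_le_trans dist dd1); rewrite /= in a1.
have a2 := Hd2 _ _ M1 M2 (lt_le_trans dist dd2); rewrite /= in a2.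
set t := (T ^+ nu) i i.
set A1 := grad1 (J i) (x i) (sigma_nu T nu i x).
set B1 := grad1 (J i) (x i) (sigma_inf x).
set A2 := grad2 (J i) (x i) (sigma_nu T nu i x).
set B2 := grad2 (J i) (x i) (sigma_inf x).
have a3 : `|t - N%:R^-1| * `|B2| < e / 3.
  apply: le_lt_trans (ler_wpM2l (normr_ge0 _) (HB2 _ M2)) _.
  apply: He2; rewrite normr_ge0 /=; apply: le_trans (HT i) _; by rewrite ge_min lexx orbT.
have [s0 _] := stochX T nu sT.
have a4 : `|t| * `|A2 - B2| <= `|A2 - B2|.
  apply: ler_piMl; rewrite ?normr_ge0 // ger0_norm ?s0 //; exact: stoch_le1 _ _ _ (stochX T nu sT).
have E : F_nu J T nu x i - F_inf J x i = (A1 - B1) + t *: (A2 - B2) + (t - N%:R^-1) *: B2.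
  rewrite /F_nu /F_inf /t; apply/rowP => k; rewrite !mxE; ring.
rewrite E; apply: le_lt_trans (ler_normD _ _) _; rewrite normrZ.
apply: le_lt_trans (lerD (ler_normD _ _) (lexx _)) _; rewrite normrZ.
have b2 := le_lt_trans a4 a2.
apply: lt_le_trans (ltrD (ltrD a1 b2) a3) _.
have -> : e / 3 + e / 3 + e / 3 = e by field.
exact: lexx.
Qed.

End P6.

Theorem lemma1 (R : realType) (N n m : nat) (hN : (0 < N)%N) (hn : (0 < n)%N)
  (hm : (0 < m)%N)
  (X : 'I_N -> set 'rV[R]_n)
  (hXconv : forall i, convex_set (X i : set (convex_lmodType 'rV[R]_n)))
  (hXcpt : forall i, compact (X i))
  (hXint : forall i, (interior (X i)) !=set0)
  (J : 'I_N -> 'rV[R]_n -> 'rV[R]_n -> R)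
  (hJC1 : forall i, C1_on (J i) [set p | X i p.1 /\ convU X p.2])
  (hJcvx : forall i (x : 'I_N -> 'rV[R]_n), inX X x ->
     convex_function (X i : set (convex_lmodType 'rV[R]_n))
       (fun w : convex_lmodType 'rV[R]_n => J i w (sigma_inf (upd x i w))))
  (Ahat : 'M[R]_(m, n)) (T : 'M[R]_N)
  (hT01 : forall i j, 0 <= T i j <= 1)
  (hTprim : primitive T) (hTds : doubly_stochastic T) :
  [/\ (fun nu => T ^+ nu) @ \oo --> Jmat R N,
      (fun nu => A_nu T Ahat nu) @ \oo --> A_inf N Ahat,
      (forall e : R, 0 < e -> exists K : nat, forall nu : nat, (K <= nu)%N ->
         forall x, inX X x -> forall i, `|F_nu J T nu x i - F_inf J x i| < e)
    & exists M : R, forall nu : nat, forall x, inX X x -> forall i,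
         `|F_nu J T nu x i| <= M].
Proof.
have sT : stoch T by split; [exact: hTds.1 | exact: hTds.2.1].
have cT := hTds.2.2.
have h1 := Tconv T hN sT cT hTprim.
split.
- exact: h1.
- exact: Aconv T Ahat h1.
- move=> e e0.
  have : forall i, exists K : nat, forall nu, (K <= nu)%N ->
      forall x, inX X x -> `|F_nu J T nu x i - F_inf J x i| < e.
    move=> i; exact: (@F_conv R N n hN X hXcpt J i (hJC1 i) T sT cT hTprim e e0).
  move=> /choice [Kf HK].
  exists (\max_(i < N) Kf i)%N => nu hnu x Hx i.
  apply: (HK i) => //; apply: leq_trans hnu.
  exact: (@leq_bigmax _ Kf i).
- have : forall i, exists M : R, forall nu x, inX X x -> `|F_nu J T nu x i| <= M.
    move=> i; exact: (@F_bound R N n X hXcpt J i (hJC1 i) T sT).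
  move=> /choice [Mf HM].
  exists (\sum_i `|Mf i|) => nu x Hx i.
  apply: le_trans (HM i nu x Hx) _.
  apply: le_trans (ler_norm (Mf i)) _.
  exact: (sum_ge_term (fun j => `|Mf j|) i (fun j => normr_ge0 _)).
Qed.
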